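(* For $1\le i<r$, \[ C_{i+1,r}(a)=C_{i,r}(a)+\sum_{k=r-i+1}^{r-1}C_{r-i+1,k}(a)\,C_{r-k,r-k}(a)-\sum_{k=i}^{r-1}C_{i,k}(a)\,C_{r-k,r-k}(a) \] as polynomials in $a$.
   Context: Bernoulli polynomials $B_n(a)$: $\sum_{n\ge0}B_n(a)x^n/n!=xe^{ax}/(e^x-1)$. For $1\le i\le r$, let $S_{i,r}$ be the set of $(n_1,\dots,n_r)\in\mathbb Z_{\ge0}^r$ with $n_1+\dots+n_r=r$, $n_1+\dots+n_j<j$ ($1\le j<i$), and $n_{j+1}+\dots+n_r\le r-j$ ($i\le j<r$), and set $C_{i,r}(a)=(-1)^r\sum_{(n_1,\dots,n_r)\in S_{i,r}}\prod_{j=1}^r\frac{B_{n_j}(a)}{n_j!}$. (These are the asymptotic coefficients at the origin of the Hurwitz multiple zeta function with all parameters equal to $a$.) *)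

(* Defs.v *)
From HB Require Import structures.
From mathcomp Require Import all_boot all_order all_algebra.
Unset Printing Implicit Defensive.
Import Order.TTheory GRing.Theory Num.Theory.
Local Open Scope ring_scope.

(* The generating function
   sum_n B_n(a) x^n/n! = x e^{ax}/(e^x-1), i.e.
   (sum_n B_n(a) x^n/n!) (e^x - 1) = x e^{ax}, is equivalent (comparing the
   coefficients of x^{n+1}/(n+1)!) to
     sum_{k=0}^{n} C(n+1,k) B_k(a) = (n+1) a^n      for all n >= 0,
   which determines B_n recursively:
     B_n = a^n - 1/(n+1) sum_{k<n} C(n+1,k) B_k. *)
Fixpoint bernp_seq (n : nat) : seq {poly rat} :=
  match n with
  | 0 => [:: 1]
  | m.+1 =>
      let s := bernp_seq m in
      rcons s ('X^(m.+1) - (m.+2%:R)^-1 *: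
                 \sum_(k < m.+1) ('C(m.+2, k))%:R *: s`_k)
  end.

Definition bernp (n : nat) : {poly rat} := nth 0 (bernp_seq n) n.

(* S_{i,r}: tuples (n_1,...,n_r) (stored 0-based as n : 'I_r -> nat;
   entries are bounded by r since they sum to r) with
   n_1+...+n_r = r,
   n_1+...+n_j < j           for 1 <= j < i,
   n_{j+1}+...+n_r <= r - j  for i <= j < r. *)
Definition inS (i r : nat) (n : {ffun 'I_r -> 'I_r.+1}) : bool :=
  [&& (\sum_(l < r) (n l : nat) == r)%N,
      [forall j : 'I_r, ((1 <= j) && (j < i))%N ==>
         (\sum_(l < r | (l < j)%N) (n l : nat) < j)%N]
    & [forall j : 'I_r, ((1 <= j) && (i <= j))%N ==>
         (\sum_(l < r | (j <= l)%N) (n l : nat) <= r - j)%N]].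

Definition Ccoef (i r : nat) : {poly rat} :=
  (-1) ^+ r * \sum_(n : {ffun 'I_r -> 'I_r.+1} | inS i r n)
                \prod_(j < r) (((n j)`!)%:R^-1 *: bernp (n j)).

(* Main.v *)
Require Import Defs.
From HB Require Import structures.
From mathcomp Require Import all_boot all_order all_algebra.
From mathcomp Require Import zify.
Import Order.TTheory GRing.Theory Num.Theory.

Fixpoint seqs (r M : nat) : seq (seq nat) :=
  if r is r'.+1 then [seq x :: s | x <- iota 0 M, s <- seqs r' M] else [:: [::]].

Lemma mem_seqs r M s : (s \in seqs r M) = (size s == r) && all (fun x => x < M) s.
Proof.
elim: r s => [|r IH] s /=.
  rewrite inE; case: s => //=. 
apply/allpairsP/idP.
  case => -[y t] /= [Hy Ht ->]; move: Ht; rewrite IH => /andP[/eqP Hs Ha] /=.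
  by rewrite Hs Ha eqxx andbT; move: Hy; rewrite mem_iota.
case: s => [|x s] //= /andP [/eqP [Hs] /andP [Hx Ha]]; exists (x, s) => /=; split => //.
  by rewrite mem_iota.
by rewrite IH Hs eqxx.
Qed.

Lemma seqs_uniq r M : uniq (seqs r M).
Proof.
elim: r => [|r IH] //=.
apply: allpairs_uniq => //; first exact: iota_uniq.
by move=> [x s] [y t] _ _ /= [-> ->].
Qed.

Section Sums.
Variable R : comNzRingType.
Local Open Scope ring_scope.

Lemma big_seqs_cons r M (F : seq nat -> R) :
  \sum_(s <- seqs r.+1 M) F s = \sum_(x <- iota 0 M) \sum_(s <- seqs r M) F (x :: s).
Proof. by rewrite /= big_allpairs_dep. Qed.

Lemma big_seqs_cat k l M (F : seq nat -> R) :
  \sum_(s <- seqs (k + l) M) F s =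
  \sum_(s1 <- seqs k M) \sum_(s2 <- seqs l M) F (s1 ++ s2).
Proof.
elim: k F => [|k IH] F.
  by rewrite add0n /= big_seq1.
rewrite addSn big_seqs_cons big_seqs_cons; apply: eq_bigr => x _.
by rewrite IH.
Qed.

Lemma big_seqs_inv r M (f : seq nat -> seq nat) (F : seq nat -> R) :
  involutive f -> (forall s, size (f s) = size s) ->
  (forall s, all (fun x => (x < M)%N) (f s) = all (fun x => (x < M)%N) s) ->
  \sum_(s <- seqs r M) F s = \sum_(s <- seqs r M) F (f s).
Proof.
move=> finv fsz fall.
rewrite -(big_map f xpredT F); apply: perm_big.
apply: uniq_perm; first exact: seqs_uniq.
  by rewrite map_inj_uniq ?seqs_uniq //; exact: inv_inj.
move=> s; rewrite -{2}(finv s) mem_map; last exact: inv_inj.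
by rewrite !mem_seqs fsz fall.
Qed.

Lemma big_seqs_bound r M M' (P : pred (seq nat)) (F : seq nat -> R) :
  (M <= M')%N -> (forall s, P s -> all (fun x => (x < M)%N) s) ->
  \sum_(s <- seqs r M' | P s) F s = \sum_(s <- seqs r M | P s) F s.
Proof.
move=> HM HP.
rewrite -(perm_big _ (_ : perm_eq [seq s <- seqs r M' | all (fun x => (x < M)%N) s] (seqs r M))).
  rewrite big_filter_cond; apply: eq_bigl => s.
  by case Ps: (P s); rewrite ?andbF ?andbT //; rewrite HP.
apply: uniq_perm; first by rewrite filter_uniq ?seqs_uniq.
  exact: seqs_uniq.
move=> s; rewrite mem_filter !mem_seqs.
case Ha: (all _ s); rewrite ?andbF //= andbT.
case: (size s == r) => //=; apply/allP => x xs; move/allP: Ha => /(_ x xs); lia.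
Qed.

End Sums.
Definition ps (s : seq nat) j := sumn (take j s).

Lemma ps0 s : ps s 0 = 0. Proof. by rewrite /ps take0. Qed.
Lemma ps_take k s j : ps (take k s) j = ps s (minn j k).
Proof. by rewrite /ps take_min. Qed.
Lemma ps_drop k s j : ps (drop k s) j = ps s (k + j) - ps s k.
Proof. by rewrite /ps takeD sumn_cat addKn. Qed.
Lemma ps_sum s j : ps s j + sumn (drop j s) = sumn s.
Proof. by rewrite /ps -sumn_cat cat_take_drop. Qed.
Lemma ps_le s j : ps s j <= sumn s.
Proof. by rewrite -(ps_sum s j) leq_addr. Qed.
Lemma ps_mono s j k : j <= k -> ps s j <= ps s k.
Proof.
by move=> jk; rewrite -(subnKC jk) /ps takeD sumn_cat leq_addr.
Qed.
Lemma ps_big s j : size s <= j -> ps s j = sumn s.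
Proof. by move=> h; rewrite /ps take_oversize. Qed.
Lemma ps_rev s j : ps (rev s) j = sumn s - ps s (size s - j).
Proof.
by rewrite /ps take_rev sumn_rev -(ps_sum s (size s - j)) /ps addKn.
Qed.
Lemma ps_cons x s j : ps (x :: s) j.+1 = x + ps s j.
Proof. by []. Qed.

Lemma alliotaP (P : pred nat) m n :
  reflect (forall j, m <= j < m + n -> P j) (all P (iota m n)).
Proof.
apply: (iffP allP) => H j; first by move=> hj; apply: H; rewrite mem_iota.
by rewrite mem_iota => hj; apply: H.
Qed.

Definition gP a b s :=
  [&& sumn s == a + b + 1, all (fun j => ps s j < j) (iota 1 a)
    & all (fun j => j <= ps s j) (iota a.+1 b)].
Definition zP a b s :=
  [&& sumn s == a + b + 1, all (fun j => ps s j <= j) (iota 1 a)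
    & all (fun j => j <= ps s j) (iota a.+1 b)].
Definition nz c s := all (fun j => ps s j != j) (iota 1 c).

Lemma gP_zP a b s : gP a b s = zP a b s && nz a s.
Proof.
rewrite /gP /zP /nz; case: (sumn s == _) => //=.
case: (all _ (iota a.+1 b)); rewrite ?andbT ?andbF //.
rewrite -all_predI; apply: eq_all => j /=; by rewrite ltn_neqAle andbC.
Qed.

Lemma zP_rev a b s : size s = a + b + 1 -> zP a b (rev s) = zP b a s.
Proof.
move=> hs; rewrite /zP sumn_rev [b + a]addnC.
case/boolP: (sumn s == _) => //= /eqP hsum.
have le := ps_le s.
apply/andP/andP => -[/alliotaP H1 /alliotaP H2]; split; apply/alliotaP => j hj.
- have := H2 (size s - j); rewrite ps_rev subKn; last lia.
  move=> h; have {}h := h ltac:(lia); have := le j; lia.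
- have := H1 (size s - j); rewrite ps_rev subKn; last lia.
  move=> h; have {}h := h ltac:(lia); have := le j; lia.
- rewrite ps_rev; have := H2 (size s - j) ltac:(lia); have := le (size s - j); lia.
- rewrite ps_rev; have := H1 (size s - j) ltac:(lia); have := le (size s - j); lia.
Qed.

Definition sigma (s : seq nat) := if s is x :: t then x :: rev t else [::].
Lemma sigma_inv : involutive sigma.
Proof. by case => //= x t; rewrite revK. Qed.

Lemma ps_consP x s j : 0 < j -> ps (x :: s) j = x + ps s j.-1.
Proof. by case: j. Qed.

Definition Acond a b t :=
  all (fun k => ps t k <= k) (iota 0 a) && all (fun k => k < ps t k) (iota a b).

Lemma gP_A a b t : 1 <= a -> size t = a + b -> sumn t = a + b + 1 ->
  gP a b (0 :: t) = Acond a b t.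
Proof.
move=> ha hs hsum; rewrite /gP /Acond /= hsum eqxx /=.
apply/andP/andP => -[/alliotaP H1 /alliotaP H2]; split; apply/alliotaP => k hk.
- have := H1 k.+1 ltac:(lia); rewrite ps_consP //=; lia.
- have := H2 k.+1 ltac:(lia); rewrite ps_consP //=; lia.
- rewrite ps_consP; last lia; have := H1 k.-1 ltac:(lia); lia.
- rewrite ps_consP; last lia; have := H2 k.-1 ltac:(lia); lia.
Qed.

Lemma gP_A' a b t : 1 <= a -> size t = a + b -> sumn t = a + b + 1 ->
  gP b.+1 a.-1 (0 :: rev t) = Acond a b t.
Proof.
move=> ha hs hsum; rewrite /gP /Acond (_ : sumn (0 :: rev t) = a + b + 1); last first.
  by rewrite /= add0n sumn_rev.
have -> : (a + b + 1 == b.+1 + a.-1 + 1) by apply/eqP; lia.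
rewrite andTb.
have le := ps_le t; rewrite hsum in le.
have top : ps t (a + b) = a + b + 1 by rewrite ps_big ?hs.
have E : forall k, k <= a + b -> ps (0 :: rev t) (a + b + 1 - k) = a + b + 1 - ps t k.
  move=> k hk; rewrite ps_consP; last lia.
  by rewrite add0n ps_rev hs hsum (_ : a + b - (a + b + 1 - k).-1 = k); last lia.
apply/andP/andP => -[/alliotaP H1 /alliotaP H2]; split; apply/alliotaP => k hk /=.
- case: (posnP k) => [->|kp]; first by rewrite ps0.
  have := H2 (a + b + 1 - k) ltac:(lia); rewrite E; last lia.
  have := le k; lia.
- have := H1 (a + b + 1 - k) ltac:(lia); rewrite E; last lia.
  have := le k; lia.
- have -> : k = a + b + 1 - (a + b + 1 - k) by lia.
  rewrite E; last lia.
  case: (ltnP (a + b + 1 - k) (a + b)) => kl.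
    have := H2 (a + b + 1 - k) ltac:(lia); have := le (a + b + 1 - k); lia.
  have -> : a + b + 1 - k = a + b by lia.
  rewrite top; lia.
- have -> : k = a + b + 1 - (a + b + 1 - k) by lia.
  rewrite E; last lia.
  have := H1 (a + b + 1 - k) ltac:(lia); have := le (a + b + 1 - k); lia.
Qed.

Lemma gP_sigma a b s : 1 <= a -> size s = a + b + 1 ->
  gP a b s = gP b.+1 a.-1 (sigma s).
Proof.
move=> ha; case: s => [|x t] /= hs'; first by lia.
have hs : size t = a + b by lia.
case: (posnP x) => [->|xp].
  case/boolP: (sumn t == a + b + 1) => [/eqP hsum|hsum].
    by rewrite gP_A // gP_A'.
  rewrite /gP /= add0n sumn_rev (negbTE hsum).
  have -> : (b.+1 + a.-1 + 1 = a + b + 1) by lia.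
  by rewrite (negbTE hsum).
have F1 : forall u c d, 1 <= c -> gP c d (x :: u) = false.
  move=> u c d hc; rewrite /gP; apply/negP => /and3P [_ /alliotaP H _].
  have := H 1 ltac:(lia); rewrite ps_consP //=; lia.
by rewrite F1 // F1.
Qed.

Lemma term_eq a b c s : c < a -> size s = a + b + 1 ->
  (gP c 0 (take c.+1 s) && zP (a - 1 - c) b (drop c.+1 s)) =
  [&& zP a b s, nz c s & ps s c.+1 == c.+1].
Proof.
move=> ca hs.
have sd : sumn (drop c.+1 s) = sumn s - ps s c.+1.
  by rewrite -(ps_sum s c.+1) addKn.
have mono := ps_mono s.
rewrite /gP /zP /nz sd.
rewrite (_ : sumn (take c.+1 s) = ps s c.+1) //.
apply/idP/idP.
- move=> /andP [/and3P [/eqP h1 /alliotaP h2 _] /and3P [/eqP h4 /alliotaP h5 /alliotaP h6]].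
  apply/and3P; split; last (apply/eqP; lia).
  + apply/and3P; split.
    * apply/eqP; have := ps_le s c.+1; lia.
    * apply/alliotaP => j hj.
      case: (ltnP c j) => cj.
        case: (ltnP c.+1 j) => cj'.
          have := h5 (j - c.+1) ltac:(lia); rewrite ps_drop subnKC; last lia.
          have := mono c.+1 j ltac:(lia); lia.
        have -> : j = c.+1 by lia.
        lia.
      have := h2 j ltac:(lia); rewrite ps_take (_ : minn j c.+1 = j); lia.
    * apply/alliotaP => j hj.
      have := h6 (j - c.+1) ltac:(lia); rewrite ps_drop subnKC; last lia.
      have := mono c.+1 j ltac:(lia); lia.
  + apply/alliotaP => j hj.
    have := h2 j ltac:(lia); rewrite ps_take (_ : minn j c.+1 = j); lia.
- move=> /and3P [/and3P [/eqP h1 /alliotaP h2 /alliotaP h3] /alliotaP h4 /eqP h5].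
  apply/andP; split; apply/and3P; split.
  + by apply/eqP; lia.
  + apply/alliotaP => j hj; rewrite ps_take.
    have := h2 j ltac:(lia); have := h4 j ltac:(lia).
    rewrite (_ : minn j c.+1 = j); last lia.
    lia.
  + by [].
  + apply/eqP; lia.
  + apply/alliotaP => j hj; rewrite ps_drop.
    have := h2 (c.+1 + j) ltac:(lia); lia.
  + apply/alliotaP => j hj; rewrite ps_drop.
    have := h3 (c.+1 + j) ltac:(lia); lia.
Qed.

Lemma nz_partition a s :
  (nz a s : nat) + \sum_(c < a) ((nz c s && (ps s c.+1 == c.+1)) : nat) = 1.
Proof.
elim: a => [|a IH]; first by rewrite big_ord0.
rewrite big_ord_recr /=.
have -> : nz a.+1 s = nz a s && (ps s a.+1 != a.+1).
  by rewrite /nz -(addn1 a) iotaD all_cat /= andbT add1n addn1.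
rewrite addnCA -IH addnC; congr (_ + _).
by case: (nz a s); case: (ps s a.+1 == a.+1).
Qed.

Local Open Scope ring_scope.

Section W.
Variable R : comNzRingType.
Variable beta : nat -> R.
Variable N : nat.

Definition wt (s : seq nat) := \prod_(x <- s) beta x.
Definition gS a b := \sum_(s <- seqs (a + b + 1) N | gP a b s) wt s.
Definition zS a b := \sum_(s <- seqs (a + b + 1) N | zP a b s) wt s.

Lemma big_ind01 (l : seq (seq nat)) (P : pred (seq nat)) (F : seq nat -> R) :
  \sum_(s <- l | P s) F s = \sum_(s <- l) (P s)%:R * F s.
Proof. by rewrite big_mkcond; apply: eq_bigr => s _; case: (P s); rewrite ?mul1r ?mul0r. Qed.

Lemma zS_sym a b : zS a b = zS b a.
Proof.
rewrite /zS [(b + a)%N]addnC big_ind01 [in RHS]big_ind01.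
rewrite (@big_seqs_inv R _ _ rev _ revK (@size_rev nat)); last by move=> s; rewrite all_rev.
rewrite big_seq [RHS]big_seq; apply: eq_bigr => s; rewrite mem_seqs => /andP [/eqP hs _].
by rewrite zP_rev // /wt big_rev.
Qed.

Lemma gS_sig a b : (1 <= a)%N -> gS a b = gS b.+1 a.-1.
Proof.
move=> ha; rewrite /gS (_ : (b.+1 + a.-1 + 1 = a + b + 1)%N); last lia.
rewrite big_ind01 [in RHS]big_ind01 (@big_seqs_inv R _ _ sigma _ sigma_inv); last first.
- by case => //= x t; rewrite all_rev.
- by case => //= x t; rewrite size_rev.
rewrite big_seq [RHS]big_seq; apply: eq_bigr => s; rewrite mem_seqs => /andP [/eqP hs _].
rewrite (@gP_sigma a b (sigma s) ha) ?sigma_inv; last by case: s hs => //= x t; rewrite size_rev.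
congr (_ * _).
by case: s {hs} => //= x t; rewrite /wt !big_cons big_rev.
Qed.

Lemma zS_D1 a b : zS a b = gS a b + \sum_(c < a) gS c 0 * zS (a - 1 - c) b.
Proof.
rewrite /zS /gS big_ind01 [in RHS]big_ind01.
have E : forall s, s \in seqs (a + b + 1) N ->
   (zP a b s)%:R * wt s = (gP a b s)%:R * wt s +
     \sum_(c < a) (gP c 0 (take c.+1 s) && zP (a - 1 - c) b (drop c.+1 s))%:R * wt s.
  move=> s; rewrite mem_seqs => /andP [/eqP hs _].
  rewrite -mulr_suml -mulrDl; congr (_ * _).
  under eq_bigr => c _ do rewrite term_eq ?ltn_ord //.
  rewrite gP_zP; case: (zP a b s) => /=; last by rewrite big1 ?addr0.
  by rewrite -natr_sum -natrD nz_partition.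
rewrite big_seq (eq_bigr _ E) -big_seq big_split /=; congr (_ + _).
rewrite exchange_big /=; apply: eq_bigr => c _.
have hc := ltn_ord c.
rewrite (_ : (a + b + 1 = c.+1 + (a - 1 - c + b + 1))%N); last lia.
have -> : (c + 0 + 1 = c.+1)%N by rewrite addn0 addn1.
rewrite (big_ind01 _ (gP c 0)) (big_ind01 _ (zP _ b)).
rewrite big_seqs_cat mulr_suml; apply: eq_big_seq => s1 h1.
rewrite mulr_sumr; apply: eq_bigr => s2 _.
move: h1; rewrite mem_seqs => /andP [/eqP h1 _].
rewrite -{1}h1 take_size_cat // -{1}h1 drop_size_cat // /wt big_cat /=.
case: (gP c 0 s1); case: (zP _ b s2); rewrite /= ?mul1r ?mul0r ?mulr0 //.
Qed.

End W.

Lemma alg_main (R : comNzRingType) (g Z : nat -> nat -> R) :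
  (forall a b, Z a b = Z b a) ->
  (forall a b, Z a b = g a b + \sum_(c < a) g c 0%N * Z (a - 1 - c)%N b) ->
  (forall a b, (1 <= a)%N -> g a b = g b.+1 a.-1) ->
  forall a b, (1 <= b)%N ->
  g a.+1 b.-1 = g a b + \sum_(j < a) g b j * g (a - 1 - j)%N 0%N
                - \sum_(j < b) g a j * g (b - 1 - j)%N 0%N.
Proof.
move=> Zs D1 Sg.
pose W a b := g a b + \sum_(j < a) g b j * g (a - 1 - j)%N 0%N.
have Wf : forall a b, W a b = Z a b -
   \sum_(c < a) \sum_(d < b) g c 0%N * g d 0%N * Z (a - 1 - c)%N (b - 1 - d)%N.
  move=> a b; rewrite /W.
  have S1 : \sum_(j < a) g b j * g (a - 1 - j)%N 0%N =
            \sum_(c < a) g c 0%N * g b (a - 1 - c)%N.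
    rewrite (reindex_inj rev_ord_inj) /=; apply: eq_bigr => c _.
    rewrite mulrC; have := ltn_ord c => h.
    rewrite (_ : (a - 1 - (a - c.+1) = c)%N); last lia.
    by rewrite (_ : (a - c.+1 = a - 1 - c)%N); last lia.
  rewrite S1 {1}(D1 a b); clear S1.
  have -> : \sum_(c < a) g c 0%N * g b (a - 1 - c)%N =
     \sum_(c < a) g c 0%N * Z (a - 1 - c)%N b -
     \sum_(c < a) \sum_(d < b) g c 0%N * g d 0%N * Z (a - 1 - c)%N (b - 1 - d)%N.
    rewrite -sumrB; apply: eq_bigr => c _.
    have -> : g b (a - 1 - c)%N = Z b (a - 1 - c)%N -
       \sum_(d < b) g d 0%N * Z (b - 1 - d)%N (a - 1 - c)%N by rewrite D1 addrK.
    rewrite mulrBr Zs mulr_sumr; congr (_ - _); apply: eq_bigr => d _.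
    by rewrite mulrA Zs.
  by rewrite addrA.
have Wsym : forall a b, W a b = W b a.
  move=> a b; rewrite !Wf Zs; congr (_ - _).
  rewrite exchange_big /=; apply: eq_bigr => d _; apply: eq_bigr => c _.
  by rewrite Zs [g c 0%N * _]mulrC.
move=> a b hb.
rewrite Sg // prednK //.
have := Wsym a b; rewrite /W => ->.
by rewrite addrK.
Qed.

Definition lst k M (n : {ffun 'I_k -> 'I_M}) : seq nat := [seq (n o : nat) | o <- enum 'I_k].
Arguments lst {k M}.

Lemma size_lst k M (n : {ffun 'I_k -> 'I_M}) : size (lst n) = k.
Proof. by rewrite size_map size_enum_ord. Qed.

Lemma nth_lst k M (n : {ffun 'I_k -> 'I_M}) (o : 'I_k) : nth 0%N (lst n) o = n o.
Proof. by rewrite (nth_map o) ?size_enum_ord ?ltn_ord // nth_ord_enum. Qed.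

Lemma lst_inj k M : injective (@lst k M).
Proof.
move=> n1 n2 E; apply/ffunP => o; apply: val_inj.
by have := congr1 (fun l => nth 0%N l o) E; rewrite /= !nth_lst.
Qed.

Lemma perm_lst k M : perm_eq (map (@lst k M) (enum {ffun 'I_k -> 'I_M})) (seqs k M).
Proof.
apply: uniq_perm; first by rewrite map_inj_uniq ?enum_uniq //; exact: lst_inj.
  exact: seqs_uniq.
move=> s; rewrite mem_seqs; apply/mapP/idP.
  case=> n _ ->; rewrite size_lst eqxx /=; apply/allP => x /mapP [o _ ->].
  exact: ltn_ord.
move=> /andP [/eqP hs /allP ha].
have H : forall o : 'I_k, (nth 0%N s o < M)%N.
  by move=> o; apply: ha; rewrite mem_nth // hs.
exists [ffun o => Ordinal (H o)]; first by rewrite mem_enum.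
apply: (@eq_from_nth _ 0%N); first by rewrite size_lst hs.
move=> i; rewrite hs => hi.
by have := nth_lst _ _ [ffun o => Ordinal (H o)] (Ordinal hi); rewrite /= ffunE /= => ->.
Qed.

Lemma big_ffun_seqs (R : comNzRingType) k M (G : seq nat -> R) :
  \sum_(n : {ffun 'I_k -> 'I_M}) G (lst n) = \sum_(s <- seqs k M) G s.
Proof.
rewrite -(perm_big _ (perm_lst k M)) big_map big_enum /=.
by apply: eq_bigl => n; rewrite inE.
Qed.

Lemma ps_lst k M (n : {ffun 'I_k -> 'I_M}) j :
  ps (lst n) j = (\sum_(l < k | (l < j)%N) (n l : nat))%N.
Proof.
rewrite /ps /lst -map_take sumnE big_map.
have -> : take j (enum 'I_k) = [seq l : 'I_k <- enum 'I_k | (l < j)%N].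
  apply: (inj_map val_inj); rewrite map_take val_enum_ord take_iota.
  rewrite -(filter_map val (fun x => (x < j)%N)) val_enum_ord.
  case: (leqP j k) => hj.
    by rewrite -(filter_iota_ltn 0 hj).
  rewrite -[LHS]filter_predT; apply: eq_in_filter => x; rewrite mem_iota /=; lia.
by rewrite big_filter big_enum_cond /=; apply: eq_bigl => l.
Qed.

Lemma sum_lst k M (n : {ffun 'I_k -> 'I_M}) :
  sumn (lst n) = (\sum_(l < k) (n l : nat))%N.
Proof.
rewrite -(@ps_big _ k) ?size_lst // ps_lst; apply: eq_bigl => l; exact: ltn_ord.
Qed.

Lemma inS_gP i k (n : {ffun 'I_k -> 'I_k.+1}) : (1 <= i <= k)%N ->
  inS i k n = gP (i - 1) (k - i) (lst n).
Proof.
move=> /andP [hi1 hik].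
rewrite /inS /gP sum_lst (_ : (i - 1 + (k - i) + 1 = k)%N); last lia.
have tot : forall j, (\sum_(l < k | (j <= l)%N) (n l : nat) = \sum_(l < k) (n l : nat) - ps (lst n) j)%N.
  move=> j; rewrite ps_lst [X in (X - _)%N](bigID (fun l : 'I_k => (l < j)%N)) /= addKn.
  by apply: eq_bigl => l; rewrite -leqNgt.
case/boolP: (_ == k) => //= /eqP hsum.
have le := ps_le (lst n); rewrite sum_lst hsum in le.
apply/andP/andP => -[H1 H2]; split.
- apply/alliotaP => j hj; have hjk : (j < k)%N by lia.
  move/forallP: H1 => /(_ (Ordinal hjk)) /implyP /= H.
  rewrite ps_lst; apply: H; lia.
- apply/alliotaP => j hj; have hjk : (j < k)%N by lia.
  move/forallP: H2 => /(_ (Ordinal hjk)) /implyP /= H.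
  have := H ltac:(lia); rewrite tot hsum; have := le j; lia.
- apply/forallP => j; apply/implyP => /andP [hj1 hj2]; have := ltn_ord j => hj3.
  rewrite -ps_lst; move/alliotaP: H1 => /(_ j); apply; lia.
- apply/forallP => j; apply/implyP => /andP [hj1 hj2]; have := ltn_ord j => hj3.
  rewrite tot hsum; move/alliotaP: H2 => /(_ j ltac:(lia)).
  have := le j; lia.
Qed.

Lemma all_le_sumn s : all (fun x => (x <= sumn s)%N) s.
Proof.
elim: s => //= x s IH; rewrite leq_addr /=.
by apply/allP => y ys; move/allP: IH => /(_ y ys) h; rewrite (leq_trans h) // leq_addl.
Qed.

Definition beta (m : nat) : {poly rat} := ((m`!)%:R^-1 *: bernp m).

Lemma Ccoef_g i k N : (1 <= i <= k)%N -> (k < N)%N ->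
  Ccoef i k = (-1) ^+ k * gS _ beta N (i - 1) (k - i).
Proof.
move=> hik hkN; rewrite /Ccoef; congr (_ * _).
rewrite big_mkcond /=.
pose G := fun s => if gP (i - 1) (k - i) s then wt _ beta s else 0.
transitivity (\sum_(n : {ffun 'I_k -> 'I_k.+1}) G (lst n)).
  apply: eq_bigr => n _; rewrite /G inS_gP //; case: (gP _ _ _) => //.
  rewrite /wt /lst big_map big_enum /=; apply: eq_bigl => o; by rewrite inE.
rewrite big_ffun_seqs /G -big_mkcond /gS.
have hs : (i - 1 + (k - i) + 1 = k)%N by lia.
rewrite hs; apply: esym; apply: big_seqs_bound => //.
move=> s /and3P [/eqP h _ _]; apply/allP => x xs.
have := allP (all_le_sumn s) x xs; rewrite h hs; lia.
Qed.

Lemma shift_sum (F : nat -> {poly rat}) m n :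
  \sum_(m <= k < n) F k = \sum_(j < n - m) F (j + m)%N.
Proof. by rewrite -{1}(add0n m) big_addn big_mkord. Qed.

Theorem theorem6p1 (i r : nat) (hi1 : (1 <= i)%N) (hir : (i < r)%N) :
  Ccoef i.+1 r =
    Ccoef i r
    + \sum_(r - i + 1 <= k < r) Ccoef (r - i + 1) k * Ccoef (r - k) (r - k)
    - \sum_(i <= k < r) Ccoef i k * Ccoef (r - k) (r - k).
Proof.
pose g := gS _ beta r.+1.
have A := @alg_main _ _ _ (@zS_sym _ beta r.+1) (@zS_D1 _ beta r.+1) (@gS_sig _ beta r.+1)
            (i - 1) (r - i) ltac:(lia).
rewrite -/g in A.
have Cg : forall i' k, (1 <= i' <= k)%N -> (k <= r)%N ->
    Ccoef i' k = (-1) ^+ k * g (i' - 1)%N (k - i')%N.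
  by move=> i' k h1 h2; rewrite (@Ccoef_g i' k r.+1 h1) //; lia.
have sgn : forall k, (k <= r)%N -> ((-1) ^+ k * (-1) ^+ (r - k) = (-1) ^+ r :> {poly rat}).
  by move=> k hk; rewrite -exprD subnKC.
rewrite Cg; last lia; last lia.
rewrite Cg; last lia; last lia.
rewrite (_ : (i.+1 - 1 = (i - 1).+1)%N); last lia.
rewrite (_ : (r - i.+1 = (r - i).-1)%N); last lia.
rewrite A.
rewrite !shift_sum.
have -> : \sum_(j < r - (r - i + 1)) Ccoef (r - i + 1) (j + (r - i + 1)) *
                 Ccoef (r - (j + (r - i + 1))) (r - (j + (r - i + 1))) =
          (-1) ^+ r * \sum_(j < i - 1) g (r - i)%N j * g (i - 1 - 1 - j)%N 0%N.
  rewrite (_ : (r - (r - i + 1) = i - 1)%N); last lia.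
  rewrite mulr_sumr; apply: eq_bigr => j _; have hj := ltn_ord j.
  rewrite Cg; last lia; last lia.
  rewrite Cg; last lia; last lia.
  rewrite mulrACA sgn; last lia.
  congr (_ * (g _ _ * g _ _)); lia.
have -> : \sum_(j < r - i) Ccoef i (j + i) * Ccoef (r - (j + i)) (r - (j + i)) =
          (-1) ^+ r * \sum_(j < r - i) g (i - 1)%N j * g (r - i - 1 - j)%N 0%N.
  rewrite mulr_sumr; apply: eq_bigr => j _; have hj := ltn_ord j.
  rewrite Cg; last lia; last lia.
  rewrite Cg; last lia; last lia.
  rewrite mulrACA sgn; last lia.
  congr (_ * (g _ _ * g _ _)); lia.
by rewrite mulrBr mulrDr.
Qed.
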